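(* Let $k\ge 1$ and let $F(x)=\sum_{i=1}^k\alpha_i\,\sigma\!\left(\frac{x-\mu_i}{s_i}\right)$ be the cdf of a $k$-component mixture of logistics distribution, where $\sigma(t)=1/(1+e^{-t})$, $\alpha_i>0$ with $\sum_i\alpha_i=1$, $\mu_i\in\mathbb{R}$, $s_i>0$. Then there exist parameters $\theta$ of a two-layer PNN with hidden dimension $k$ such that, writing $N^{[A,B]}_\theta$ for the normalized PNN cdf with support bounds $[A,B]$, $$\sup_{x\in[A,B]}\bigl|N^{[A,B]}_\theta(x)-F(x)\bigr|\longrightarrow 0\quad\text{as } A\to-\infty,\ B\to\infty.$$
   Context: Let $\sigma(t)=1/(1+e^{-t})$. A two-layer PNN with hidden dimension $k$ is the function $F_\theta(x)=\sum_{i=1}^k\beta_i\,\sigma(w_i x+c_i)$ of $x\in\mathbb{R}$, with parameters $\theta$ consisting of $w_i>0$, $c_i\in\mathbb{R}$, and a probability vector $(\beta_1,\dots,\beta_k)$ with all $\beta_i>0$ (in the paper the positivity constraints are enforced by reparametrizing $w_i=e^{-A_i}$, $c_i=-e^{-A_i}b_i$ and $\beta=\mathrm{softmax}(\cdot)$). Given support bounds $A<B$, the normalized PNN cdf is $N^{[A,B]}_\theta(x)=\frac{F_\theta(x)-F_\theta(A)}{F_\theta(B)-F_\theta(A)}$ for $x\in[A,B]$. *)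

(* Defs.v *)
From Stdlib Require Import Reals.
Open Scope R_scope.

Fixpoint sum_lt (k : nat) (f : nat -> R) : R :=
  match k with
  | O => 0
  | S n => sum_lt n f + f n
  end.

Definition sigma (t : R) : R := 1 / (1 + exp (- t)).

Definition mixF (k : nat) (alpha mu s : nat -> R) (x : R) : R :=
  sum_lt k (fun i => alpha i * sigma ((x - mu i) / s i)).

Definition pnnF (k : nat) (w c beta : nat -> R) (x : R) : R :=
  sum_lt k (fun i => beta i * sigma (w i * x + c i)).

Definition pnnN (k : nat) (w c beta : nat -> R) (A B x : R) : R :=
  (pnnF k w c beta x - pnnF k w c beta A) /
  (pnnF k w c beta B - pnnF k w c beta A).

(* Main.v *)
Require Import Defs.
From Stdlib Require Import Reals Lra Lia Psatz.
Open Scope R_scope.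

Lemma sum_lt_le k f g : (forall i, (i < k)%nat -> f i <= g i) -> sum_lt k f <= sum_lt k g.
Proof. induction k; simpl; intros H. lra.
  assert (sum_lt k f <= sum_lt k g) by (apply IHk; intros; apply H; lia).
  assert (f k <= g k) by (apply H; lia). lra. Qed.

Lemma sum_lt_ext k f g : (forall i, f i = g i) -> sum_lt k f = sum_lt k g.
Proof. induction k; simpl; intros H. lra. rewrite IHk, H; auto. Qed.

Lemma sum_lt_mulr k f c : sum_lt k (fun i => f i * c) = sum_lt k f * c.
Proof. induction k; simpl. ring. rewrite IHk. ring. Qed.

Lemma sum_lt_minus k f g : sum_lt k (fun i => f i - g i) = sum_lt k f - sum_lt k g.
Proof. induction k; simpl. ring. rewrite IHk. ring. Qed.

Lemma sum_lt_term k f j : (forall i, (i < k)%nat -> 0 <= f i) -> (j < k)%nat -> f j <= sum_lt k f.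
Proof. induction k; simpl; intros H Hj. lia.
  assert (0 <= sum_lt k f).
  { clear IHk Hj. induction k; simpl. lra.
    assert (0 <= f k) by (apply H; lia).
    assert (0 <= sum_lt k f) by (apply IHk; intros; apply H; lia). lra. }
  destruct (Nat.eq_dec j k). subst. assert (0 <= f k) by (apply H; lia). lra.
  assert (f j <= sum_lt k f) by (apply IHk; [intros; apply H; lia | lia]).
  assert (0 <= f k) by (apply H; lia). lra. Qed.

Lemma sigma_eq t : Defs.sigma t = exp t / (exp t + 1).
Proof. unfold Defs.sigma. rewrite exp_Ropp. assert (0 < exp t) by apply exp_pos. field. lra. Qed.

Lemma sigma_bounds t : 0 <= Defs.sigma t <= 1 /\ Defs.sigma t <= exp t /\ 1 - Defs.sigma t <= exp (- t).
Proof. rewrite sigma_eq, exp_Ropp. assert (0 < exp t) by apply exp_pos. set (E := exp t) in *.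
  assert (E / (E+1) * (E+1) = E) by (field; lra).
  assert (/E * E = 1) by (field; lra).
  repeat split; nra. Qed.

Theorem lemma4 (k : nat) (alpha mu s : nat -> R) :
  (1 <= k)%nat ->
  (forall i, (i < k)%nat -> 0 < alpha i) ->
  sum_lt k alpha = 1 ->
  (forall i, (i < k)%nat -> 0 < s i) ->
  exists w c beta : nat -> R,
    (forall i, (i < k)%nat -> 0 < w i) /\
    (forall i, (i < k)%nat -> 0 < beta i) /\
    sum_lt k beta = 1 /\
    (forall eps, 0 < eps ->
       exists M, forall A B, A <= - M -> M <= B -> A < B ->
         forall x, A <= x <= B ->
           Rabs (pnnN k w c beta A B x - mixF k alpha mu s x) <= eps).
Proof.
  intros Hk Ha Hsum Hs.
  exists (fun i => / s i), (fun i => - mu i / s i), alpha.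
  split; [intros; apply Rinv_0_lt_compat; auto|].
  split; [auto|]. split; [auto|].
  intros eps Heps.
  set (d := Rmin (eps/4) (1/8)).
  assert (Hd0 : 0 < d) by (unfold d; apply Rmin_pos; lra).
  assert (Hd1 : d <= eps/4) by apply Rmin_l.
  assert (Hd2 : d <= 1/8) by apply Rmin_r.
  set (L := Rabs (ln d)).
  exists (sum_lt k (fun i => Rabs (mu i) + s i * L)).
  intros A B HA HB HAB x Hx.
  assert (HF : forall y, pnnF k (fun i => / s i) (fun i => - mu i / s i) alpha y = mixF k alpha mu s y).
  { intros y. unfold pnnF, mixF. apply sum_lt_ext. intros i. f_equal. f_equal. unfold Rdiv. ring. }
  unfold pnnN. rewrite !HF.
  assert (HL : 0 <= L) by apply Rabs_pos.
  assert (HM : forall i, (i < k)%nat -> Rabs (mu i) + s i * L <= sum_lt k (fun i => Rabs (mu i) + s i * L)).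
  { intros i Hi. apply (sum_lt_term k (fun i => Rabs (mu i) + s i * L)); auto.
    intros j Hj. pose proof (Rabs_pos (mu j)). pose proof (Hs j Hj). nra. }
  set (M := sum_lt k (fun i => Rabs (mu i) + s i * L)) in *.
  assert (Hexp : forall t, t <= - L -> exp t <= d).
  { intros t Ht. rewrite <- (exp_ln d Hd0). 
    pose proof (Rle_abs (- ln d)) as H. rewrite Rabs_Ropp in H. fold L in H.
    destruct (Req_dec t (ln d)) as [E|E]. rewrite E; lra.
    apply Rlt_le, exp_increasing. lra. }
  assert (F01 : forall y, 0 <= mixF k alpha mu s y <= 1).
  { intros y. unfold mixF. split.
    - apply Rle_trans with (sum_lt k (fun _ => 0)).
      + clear. induction k; simpl; lra.
      + apply sum_lt_le. intros i Hi. pose proof (Ha i Hi).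
        destruct (sigma_bounds ((y - mu i) / s i)) as [[? ?] _]. nra.
    - replace 1 with (sum_lt k (fun i => alpha i * 1)) by (rewrite sum_lt_mulr; lra).
      apply sum_lt_le. intros i Hi. pose proof (Ha i Hi).
      destruct (sigma_bounds ((y - mu i) / s i)) as [[? ?] _]. nra. }
  assert (FA : mixF k alpha mu s A <= d).
  { unfold mixF. rewrite <- (Rmult_1_l d), <- Hsum, <- sum_lt_mulr.
    apply sum_lt_le. intros i Hi. pose proof (Ha i Hi). pose proof (Hs i Hi).
    destruct (sigma_bounds ((A - mu i) / s i)) as [_ [? _]].
    assert (exp ((A - mu i) / s i) <= d).
    { apply Hexp. pose proof (HM i Hi). pose proof (Rle_abs (- mu i)) as H4. rewrite Rabs_Ropp in H4.
      apply Rmult_le_reg_r with (s i); auto. unfold Rdiv. rewrite Rmult_assoc, Rinv_l by lra. nra. }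
    nra. }
  assert (FB : 1 - mixF k alpha mu s B <= d).
  { unfold mixF. rewrite <- Hsum at 1. rewrite <- (Rmult_1_l d), <- Hsum, <- sum_lt_mulr.
    rewrite <- sum_lt_minus.
    apply sum_lt_le. intros i Hi. pose proof (Ha i Hi). pose proof (Hs i Hi).
    destruct (sigma_bounds ((B - mu i) / s i)) as [_ [_ ?]].
    assert (exp (- ((B - mu i) / s i)) <= d).
    { apply Hexp. pose proof (HM i Hi). pose proof (Rle_abs (mu i)).
      assert ((B - mu i) / s i >= L); [|lra].
      apply Rle_ge. apply Rmult_le_reg_r with (s i); auto. unfold Rdiv. rewrite Rmult_assoc, Rinv_l by lra. nra. }
    nra. }
  pose proof (F01 A). pose proof (F01 B). pose proof (F01 x).
  set (a := mixF k alpha mu s A) in *. set (b := mixF k alpha mu s B) in *.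
  set (y := mixF k alpha mu s x) in *.
  assert (Hba : 3/4 <= b - a) by lra.
  replace ((y - a) / (b - a) - y) with ((y * (1 - b) - a * (1 - y)) / (b - a)) by (field; lra).
  unfold Rdiv. rewrite Rabs_mult, Rabs_inv, (Rabs_right (b - a)) by lra.
  assert (Rabs (y * (1 - b) - a * (1 - y)) <= d).
  { apply Rabs_le. split; nra. }
  assert (/ (b - a) <= 4/3).
  { apply Rmult_le_reg_l with (b - a). lra. rewrite Rinv_r by lra. lra. }
  assert (0 <= / (b - a)) by (apply Rlt_le, Rinv_0_lt_compat; lra).
  pose proof (Rabs_pos (y * (1 - b) - a * (1 - y))). nra.
Qed.
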